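(* Consider either the FMM or the MMM with a mutant fitness distribution $\mu$ satisfying $G(x)>0$ for all $x>0$, and $\beta\in(0,1)$. For $t\in\mathbb N_0$ let $W_t$ be the fitness of the fittest of all mutants produced in generation $t$ (in the FMM this includes the mutants that die instantly), with $W_t=0$ if there is no mutant in generation $t$. Then almost surely on the event of survival the sequence $(W_t)_{t\ge0}$ is unbounded.
   Context: Models: Fix a probability distribution $\mu$ on $(0,\infty)$ and $\beta\in(0,1)$. The population evolves in discrete generations $t=0,1,2,\dots$; generation $0$ consists of a single individual with fitness $f>0$. Each individual of generation $t$ independently produces a Poisson distributed number of offspring whose mean equals its fitness. Each offspring independently, with probability $1-\beta$, inherits its parent's fitness and joins generation $t+1$; otherwise (probability $\beta$) it is a mutant. In the fittest mutant model (FMM), every mutant gets an independent fitness sampled from $\mu$, and only the fittest mutant of generation $t+1$ (if any mutant exists) is added to generation $t+1$; all other mutants die instantly. In the multiple mutant model (MMM), every mutant gets an independent fitness sampled from $\mu$ and all mutants are added to generation $t+1$. $X(t)$ is the number of individuals in generation $t$; survival is the event $\{X(t)\neq0 \text{ for all } t\}$. Write $G(x):=\mu((x,\infty))$. *)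

(* Defs.v *)
From HB Require Import structures.
From mathcomp Require Import all_boot all_order all_algebra.
From mathcomp Require Import all_classical all_reals all_analysis.

Set Implicit Arguments.
Unset Strict Implicit.
Unset Printing Implicit Defensive.

Import Order.TTheory GRing.Theory Num.Theory.
Import numFieldNormedType.Exports.

Local Open Scope classical_set_scope.
Local Open Scope ring_scope.

Inductive model := FMM | MMM.

Section poisson_sampling.
Context {R : realType}.

(* pmf of Poisson(r), r >= 0 (with 0^0 = 1, so Poisson(0) = delta_0) *)
Definition pois_pmf (r : R) (k : nat) : R := expR (- r) * r ^+ k / k`!%:R.

Definition pois_cdf (r : R) (n : nat) : R := \sum_(k < n.+1) pois_pmf r k.

(* generalized inverse of the cdf: least n with u <= F(n);
   if u is a Uniform[0,1] variable, pois_quantile r u ~ Poisson(r). *)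
Definition pois_quantile (r u : R) : nat :=
  match pselect (exists n, u <= pois_cdf r n) with
  | left h => ex_minn h
  | right _ => 0%N
  end.
End poisson_sampling.

Section process.
Context {R : realType} {T : Type}.
(* Primitive randomness:
   U t i   : uniform variable driving the number of offspring of individual
             i (position i in the list) of generation t;
   B t i k : uniform variable; offspring k of that individual is a mutant
             iff B t i k < beta (probability beta);
   Y t i k : fitness (law mu) of offspring k of that individual if it is
             a mutant. *)
Variables (U : nat -> nat -> T -> R) (B Y : nat -> nat -> nat -> T -> R).
Variables (m : model) (beta f : R) (w : T).

Definition noff (t i : nat) (fit : R) : nat := pois_quantile fit (U t i w).

Definition is_mutant (t i k : nat) : bool := B t i k w < beta.

Definition mutants_of (t i : nat) (fit : R) : seq R :=
  [seq Y t i k w | k <- iota 0 (noff t i fit) & is_mutant t i k].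

Definition nclones (t i : nat) (fit : R) : nat :=
  count (fun k => ~~ is_mutant t i k) (iota 0 (noff t i fit)).

Definition indexed (pop : seq R) : seq (nat * R) := zip (iota 0 (size pop)) pop.

(* all mutants produced by generation t (they belong to generation t+1) *)
Definition all_mutants (t : nat) (pop : seq R) : seq R :=
  flatten [seq mutants_of t p.1 p.2 | p <- indexed pop].

Definition all_clones (t : nat) (pop : seq R) : seq R :=
  flatten [seq nseq (nclones t p.1 p.2) p.2 | p <- indexed pop].

Definition maxs (s : seq R) : R := foldr Num.max 0 s.

Definition step (t : nat) (pop : seq R) : seq R :=
  match m with
  | MMM => all_clones t pop ++ all_mutants t pop
  | FMM => all_clones t pop ++
           (if all_mutants t pop is [::] then [::] else [:: maxs (all_mutants t pop)])
  end.

(* generation t, as the list of fitnesses of its individuals *)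
Fixpoint gen (t : nat) : seq R :=
  match t with
  | 0%N => [:: f]
  | t'.+1 => step t' (gen t')
  end.

Definition popsize (t : nat) : nat := size (gen t).

Definition survives : Prop := forall t, popsize t <> 0%N.

(* Generation 0 consists of a single non-mutant individual, so W 0 = 0. *)
Definition W (t : nat) : R :=
  match t with
  | 0%N => 0
  | t'.+1 => maxs (all_mutants t' (gen t'))
  end.
End process.

Section primitives.
Context {R : realType} {d : measure_display} {T : measurableType d}.

Definition mutually_independent (I : eqType) (P : probability T R)
    (X : I -> T -> R) : Prop :=
  (forall i, measurable_fun setT (X i)) /\
  forall (s : seq I) (A : I -> set R), uniq s -> (forall i, measurable (A i)) ->
    P (\bigcap_(i in [set` s]) (X i @^-1` A i)) =
    (\big[*%E/1%E]_(i <- s) P (X i @^-1` A i))%E.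

Definition prim (U : nat -> nat -> T -> R) (B Y : nat -> nat -> nat -> T -> R) :
    ((nat * nat) + (nat * nat * nat) + (nat * nat * nat))%type -> T -> R :=
  fun j => match j with
           | inl (inl (t, i)) => U t i
           | inl (inr (t, i, k)) => B t i k
           | inr (t, i, k) => Y t i k
           end.

Definition model_primitives (P : probability T R) (mu : probability R R)
    (U : nat -> nat -> T -> R) (B Y : nat -> nat -> nat -> T -> R) : Prop :=
  mutually_independent P (prim U B Y) /\
  (forall t i A, measurable A -> P (U t i @^-1` A) = uniform_prob (@ltr01 R) A) /\
  (forall t i k A, measurable A -> P (B t i k @^-1` A) = uniform_prob (@ltr01 R) A) /\
  (forall t i k A, measurable A -> P (Y t i k @^-1` A) = mu A).
End primitives.

(* Main.v *)
Require Import Defs.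
From HB Require Import structures.
From mathcomp Require Import all_boot all_order all_algebra.
From mathcomp Require Import all_classical all_reals all_analysis.
From mathcomp Require Import measurable_realfun ring lra.
Import Order.TTheory GRing.Theory Num.Theory.
Local Open Scope classical_set_scope.
Local Open Scope ring_scope.

Set Implicit Arguments.
Unset Strict Implicit.
Unset Printing Implicit Defensive.

Section Gen.
Context {R : realType} {d' : measure_display} {T' : measurableType d'}.

Definition mnat (N : T' -> nat) := forall n, measurable [set w | N w = n].
Definition mreal (g : T' -> R) := measurable_fun setT g.
Definition mbool (b : T' -> bool) := measurable [set w | b w].
Definition good (S : T' -> seq R) :=
  mnat (fun w => size (S w)) /\ forall i, mreal (fun w => nth 0 (S w) i).

Lemma mnat_pred N (Q : nat -> Prop) : mnat N -> measurable [set w | Q (N w)].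
Proof.
move=> mN.
have -> : [set w | Q (N w)] = \bigcup_(n in Q) [set w | N w = n].
  by apply/seteqP; split=> [w Qw|w [n Qn /= ->]]; [exists (N w)|].
by apply: bigcup_measurable => n _; exact: mN.
Qed.

Lemma mnat_cst n : mnat (fun _ => n).
Proof.
move=> k; case: (eqVneq n k) => [->|nk].
  by rewrite [X in measurable X](_ : _ = setT) //; apply/seteqP; split.
by rewrite [X in measurable X](_ : _ = set0) //; apply/seteqP; split=> // w /= /eqP; rewrite (negbTE nk).
Qed.

Lemma mreal_pre g A : mreal g -> measurable A -> measurable (g @^-1` A).
Proof. by move=> mg mA; have := mg measurableT A mA; rewrite setTI. Qed.

Lemma mreal_piece N (g : T' -> R) (h : nat -> T' -> R) :
  mnat N -> (forall n, mreal (h n)) -> (forall w, g w = h (N w) w) -> mreal g.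
Proof.
move=> mN mh e _ A mA; rewrite setTI.
have -> : g @^-1` A = \bigcup_n ([set w | N w = n] `&` h n @^-1` A).
  apply/seteqP; split=> [w /= gA|w [n _ /= [Nw hA]]]; last by rewrite e Nw.
  by exists (N w) => //=; split => //; rewrite -e.
by apply: bigcupT_measurable => n; apply: measurableI => //; exact: mreal_pre.
Qed.

Lemma mnat_piece N (g : T' -> nat) (h : nat -> T' -> nat) :
  mnat N -> (forall n, mnat (h n)) -> (forall w, g w = h (N w) w) -> mnat g.
Proof.
move=> mN mh e k.
have -> : [set w | g w = k] = \bigcup_n ([set w | N w = n] `&` [set w | h n w = k]).
  apply/seteqP; split=> [w /= gA|w [n _ /= [Nw hA]]]; last by rewrite e Nw.
  by exists (N w) => //=; split => //; rewrite -e.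
by apply: bigcupT_measurable => n; apply: measurableI; [exact: mN|exact: mh].
Qed.

Lemma mbool_piece N (g : T' -> bool) (h : nat -> T' -> bool) :
  mnat N -> (forall n, mbool (h n)) -> (forall w, g w = h (N w) w) -> mbool g.
Proof.
move=> mN mh e; rewrite /mbool.
have -> : [set w | is_true (g w)] = \bigcup_n ([set w | N w = n] `&` [set w | h n w]).
  apply/seteqP; split=> [w /= gA|w [n _ /= [Nw hA]]]; last by rewrite e Nw.
  by exists (N w) => //=; split => //; rewrite -e.
by apply: bigcupT_measurable => n; apply: measurableI; [exact: mN|exact: mh].
Qed.

Lemma good_piece N (g : T' -> seq R) (h : nat -> T' -> seq R) :
  mnat N -> (forall n, good (h n)) -> (forall w, g w = h (N w) w) -> good g.
Proof.
move=> mN mh e; split.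
  apply: (mnat_piece (h := fun n w => size (h n w))) mN _ _ => [n|w]; first by case: (mh n).
  by rewrite e.
move=> i; apply: (mreal_piece (h := fun n w => nth 0 (h n w) i)) mN _ _ => [n|w].
  by case: (mh n) => _; apply.
by rewrite e.
Qed.

Lemma mbool_and b1 b2 : mbool b1 -> mbool b2 -> mbool (fun w => b1 w && b2 w).
Proof.
move=> m1 m2; rewrite /mbool [X in measurable X](_ : _ = [set w | b1 w] `&` [set w | b2 w]).
  exact: measurableI.
by apply/seteqP; split=> w /=; [move/andP|move=> [-> ->]].
Qed.

Lemma mbool_not b : mbool b -> mbool (fun w => ~~ b w).
Proof.
move=> m; rewrite /mbool [X in measurable X](_ : _ = ~` [set w | b w]).
  exact: measurableC.
by apply/seteqP; split=> w /=; case: (b w).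
Qed.

Lemma mbool_nat b : mbool b -> mnat (fun w => nat_of_bool (b w)).
Proof.
move=> m n; case: n => [|[|n]].
- rewrite [X in measurable X](_ : _ = [set w | ~~ b w]); first exact: mbool_not.
  by apply/seteqP; split=> w /=; case: (b w).
- rewrite [X in measurable X](_ : _ = [set w | b w]) //.
  by apply/seteqP; split=> w /=; case: (b w).
- rewrite [X in measurable X](_ : _ = set0) //.
  by apply/seteqP; split=> w //=; case: (b w).
Qed.

Lemma mnat_bool N (Q : pred nat) : mnat N -> mbool (fun w => Q (N w)).
Proof. by move=> mN; exact: (mnat_pred (fun n => Q n)). Qed.

Lemma mnat_app1 N (h : nat -> nat) : mnat N -> mnat (fun w => h (N w)).
Proof. by move=> mN k; exact: (mnat_pred (fun n => h n = k)). Qed.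

Lemma mnat_app2 N1 N2 (h : nat -> nat -> nat) : mnat N1 -> mnat N2 ->
  mnat (fun w => h (N1 w) (N2 w)).
Proof.
move=> m1 m2; apply: (mnat_piece (h := fun n w => h n (N2 w))) m1 _ _ => // n.
exact: mnat_app1.
Qed.

Lemma mreal_nat N (h : nat -> R) : mnat N -> mreal (fun w => h (N w)).
Proof.
move=> mN; apply: (mreal_piece (h := fun n _ => h n)) mN _ _ => // n.
exact: measurable_cst.
Qed.

Lemma mbool_lt g1 g2 : mreal g1 -> mreal g2 -> mbool (fun w => g1 w < g2 w).
Proof.
move=> m1 m2; have h := measurable_fun_ltr m1 m2.
have := h measurableT [set true] ltac:(by []) .
by rewrite setTI; congr measurable; apply/seteqP; split.
Qed.

Lemma mbool_le g1 g2 : mreal g1 -> mreal g2 -> mbool (fun w => g1 w <= g2 w).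
Proof.
move=> m1 m2; have h := measurable_fun_ler m1 m2.
have := h measurableT [set true] ltac:(by []) .
by rewrite setTI; congr measurable; apply/seteqP; split.
Qed.

Lemma mreal_if b g1 g2 : mbool b -> mreal g1 -> mreal g2 ->
  mreal (fun w => if b w then g1 w else g2 w).
Proof.
move=> mb m1 m2; apply: (mreal_piece (N := fun w => nat_of_bool (b w))
  (h := fun n w => if n == 1%N then g1 w else g2 w)); first exact: mbool_nat.
  by move=> n; case: (n == 1%N).
by move=> w; case: (b w).
Qed.

Lemma mnat_if b g1 g2 : mbool b -> mnat g1 -> mnat g2 ->
  mnat (fun w => if b w then g1 w else g2 w).
Proof.
move=> mb m1 m2; apply: (mnat_piece (N := fun w => nat_of_bool (b w))
  (h := fun n w => if n == 1%N then g1 w else g2 w)); first exact: mbool_nat.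
  by move=> n; case: (n == 1%N).
by move=> w; case: (b w).
Qed.

Lemma good_if b g1 g2 : mbool b -> good g1 -> good g2 ->
  good (fun w => if b w then g1 w else g2 w).
Proof.
move=> mb [s1 n1] [s2 n2]; split.
  have -> : (fun w => size (if b w then g1 w else g2 w)) = (fun w => if b w then size (g1 w) else size (g2 w)).
    by apply/funext => w; case: (b w).
  exact: mnat_if.
move=> i.
have -> : (fun w => nth 0 (if b w then g1 w else g2 w) i) = (fun w => if b w then nth 0 (g1 w) i else nth 0 (g2 w) i).
  by apply/funext => w; case: (b w).
exact: mreal_if.
Qed.

Lemma good_nil : good (fun _ => [::]).
Proof. by split=> [|i]; [exact: mnat_cst|rewrite /mreal; under eq_fun do rewrite nth_nil; exact: measurable_cst]. Qed.

Lemma good_single g : mreal g -> good (fun w => [:: g w]).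
Proof.
move=> mg; split=> [|i]; first exact: mnat_cst.
case: i => [|i] //=; rewrite /mreal; under eq_fun do rewrite nth_nil; exact: measurable_cst.
Qed.

Lemma good_cat g1 g2 : good g1 -> good g2 -> good (fun w => g1 w ++ g2 w).
Proof.
move=> [s1 n1] [s2 n2]; split.
  by under eq_fun do rewrite size_cat; exact: mnat_app2.
move=> i; under eq_fun do rewrite nth_cat.
apply: mreal_if => //; first exact: (mnat_bool (fun n => i < n)%N).
apply: (mreal_piece (N := fun w => size (g1 w)) (h := fun n w => nth 0 (g2 w) (i - n))) => //.
Qed.

Lemma good_nseq N g : mnat N -> mreal g -> good (fun w => nseq (N w) (g w)).
Proof.
move=> mN mg; split; first by under eq_fun do rewrite size_nseq.
move=> i; under eq_fun do rewrite nth_nseq.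
apply: mreal_if => //; first exact: (mnat_bool (fun n => i < n)%N).
exact: measurable_cst.
Qed.


Lemma indexedE (s : seq R) :
  Defs.indexed s = [seq (i, nth 0 s i) | i <- iota 0 (size s)].
Proof.
apply: (@eq_from_nth _ (0%N, 0)).
  by rewrite /Defs.indexed size_zip size_iota size_map size_iota minnn.
move=> i; rewrite /Defs.indexed size_zip size_iota minnn => lti.
by rewrite nth_zip ?size_iota // (nth_map 0%N) ?size_iota // nth_iota.
Qed.

Lemma good_flatten (pop : T' -> seq R) (h : nat -> R -> T' -> seq R) :
  good pop -> (forall i, good (fun w => h i (nth 0 (pop w) i) w)) ->
  good (fun w => flatten [seq h p.1 p.2 w | p <- Defs.indexed (pop w)]).
Proof.
move=> gp gh.
apply: (good_piece (N := fun w => size (pop w))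
  (h := fun n w => flatten [seq h i (nth 0 (pop w) i) w | i <- iota 0 n])).
- by case: gp.
- elim=> [|n IH]; first exact: good_nil.
  rewrite -[n.+1]addn1.
  have -> : (fun w => flatten [seq h i (nth 0 (pop w) i) w | i <- iota 0 (n + 1)]) =
      (fun w => flatten [seq h i (nth 0 (pop w) i) w | i <- iota 0 n] ++ h n (nth 0 (pop w) n) w).
    by apply/funext => w; rewrite iotaD map_cat flatten_cat /= cats0.
  exact: good_cat.
- by move=> w; rewrite indexedE -map_comp.
Qed.

Lemma good_filtmap n (yk : nat -> T' -> R) (bk : nat -> T' -> bool) :
  (forall k, mreal (yk k)) -> (forall k, mbool (bk k)) ->
  good (fun w => [seq yk k w | k <- iota 0 n & bk k w]).
Proof.
move=> my mb; elim: n => [|n IH]; first exact: good_nil.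
rewrite -[n.+1]addn1.
have -> : (fun w => [seq yk k w | k <- iota 0 (n + 1) & bk k w]) =
    (fun w => [seq yk k w | k <- iota 0 n & bk k w] ++
       if bk n w then [:: yk n w] else [::]).
  by apply/funext => w; rewrite iotaD filter_cat map_cat /=; case: (bk n w).
apply: good_cat => //; apply: good_if => //; [exact: good_single|exact: good_nil].
Qed.

Lemma mnat_count n (bk : nat -> T' -> bool) : (forall k, mbool (bk k)) ->
  mnat (fun w => count (fun k => bk k w) (iota 0 n)).
Proof.
move=> mb; elim: n => [|n IH]; first exact: mnat_cst.
rewrite -[n.+1]addn1.
have -> : (fun w => count (fun k => bk k w) (iota 0 (n + 1))) =
    (fun w => count (fun k => bk k w) (iota 0 n) + nat_of_bool (bk n w))%N.
  by apply/funext => w; rewrite iotaD count_cat /= addn0.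
exact: (mnat_app2 addn IH (mbool_nat (mb n))).
Qed.

Lemma mreal_maxs (S : T' -> seq R) : good S -> mreal (fun w => maxs (S w)).
Proof.
move=> [sz nt].
apply: (mreal_piece (N := fun w => size (S w))
  (h := fun n w => foldr Num.max 0 [seq nth 0 (S w) i | i <- iota 0 n])) => //.
  move=> n; elim: n 0%N => [|n IH] k /=; first exact: measurable_cst.
  exact: (measurable_maxr (nt k) (IH k.+1)).
by move=> w; rewrite /maxs -{1}(mkseq_nth 0 (S w)).
Qed.


Lemma mreal_cdf (r : T' -> R) n : mreal r -> mreal (fun w => pois_cdf (r w) n).
Proof.
move=> mr; rewrite /pois_cdf; elim: n.+1 => [|k IH].
  under eq_fun do rewrite big_ord0; exact: measurable_cst.
under eq_fun do rewrite big_ord_recr /=.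
apply: measurable_funD => //; rewrite /pois_pmf.
apply: measurable_funM; last exact: measurable_cst.
apply: measurable_funM; last exact: measurable_funX.
apply: measurableT_comp; first exact: measurable_expR.
exact: measurable_funN.
Qed.

Lemma pq_spec (r u : R) n : pois_quantile r u = n <->
  ((u <= pois_cdf r n /\ forall k, (k < n)%N -> pois_cdf r k < u) \/
   (n = 0%N /\ forall k, pois_cdf r k < u)).
Proof.
rewrite /pois_quantile; case: pselect => [h|h].
  case: ex_minnP => m um minm; split.
    move=> <-; left; split => // k km; rewrite ltNge; apply/negP => uk.
    by have := minm _ uk; rewrite leqNgt km.
  case=> [[un nk]|[n0 nk]].
    apply/eqP; rewrite eqn_leq (minm _ un) /= leqNgt; apply/negP => mn.
    by have := nk _ mn; rewrite ltNge um.
  by have := nk m; rewrite ltNge um.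
split.
  move=> <-; right; split => // k; rewrite ltNge; apply/negP => uk.
  by apply: h; exists k.
case=> [[un _]|[-> //]].
by exfalso; apply: h; exists n.
Qed.

Lemma mnat_pq (r u : T' -> R) : mreal r -> mreal u ->
  mnat (fun w => pois_quantile (r w) (u w)).
Proof.
move=> mr mu n.
have mlt k : measurable [set w | pois_cdf (r w) k < u w].
  exact: mbool_lt (mreal_cdf k mr) mu.
have -> : [set w | pois_quantile (r w) (u w) = n] =
    ([set w | u w <= pois_cdf (r w) n] `&`
      \bigcap_k (if (k < n)%N then [set w | pois_cdf (r w) k < u w] else setT)) `|`
    (if n == 0%N then \bigcap_k [set w | pois_cdf (r w) k < u w] else set0).
  apply/seteqP; split => w /=.
    move/pq_spec => [[un nk]|[n0 nk]].
      left; split => // k _ /=; case: ifP => // kn; exact: nk.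
    by right; rewrite n0 /= => k _; exact: nk.
  move=> [[un nk]|].
    apply/(pq_spec (r w) (u w) n); left; split => // k kn; have := nk k I; by rewrite kn.
  case: eqP => // -> nk; apply/(pq_spec (r w) (u w) 0); right; split => // k; exact: nk k I.
apply: measurableU.
  apply: measurableI; first exact: mbool_le mu (mreal_cdf n mr).
  by apply: bigcapT_measurable => k; case: ifP.
by case: eqP => _ //; exact: bigcapT_measurable.
Qed.

End Gen.
Section Proc.
Context {R : realType} {d' : measure_display} {T' : measurableType d'}.
Variables (U : nat -> nat -> T' -> R) (B Y : nat -> nat -> nat -> T' -> R).
Variables (m : model) (beta f : R).

Definition okt (t : nat) :=
  (forall s i, (s < t)%N -> mreal (U s i)) /\
  (forall s i k, (s < t)%N -> mreal (B s i k) /\ mreal (Y s i k)).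

Lemma mnat_noff t i (fit : T' -> R) : mreal (U t i) -> mreal fit ->
  mnat (fun w => noff U w t i (fit w)).
Proof. by move=> mU mf; exact: mnat_pq. Qed.

Lemma good_mutants_of t i (fit : T' -> R) : mreal (U t i) ->
  (forall k, mreal (B t i k) /\ mreal (Y t i k)) -> mreal fit ->
  good (fun w => mutants_of U B Y beta w t i (fit w)).
Proof.
move=> mU mBY mf.
apply: (good_piece (N := fun w => noff U w t i (fit w))
  (h := fun n w => [seq Y t i k w | k <- iota 0 n & B t i k w < beta])).
- exact: mnat_noff.
- move=> n; apply: good_filtmap => k; first by case: (mBY k).
  by apply: mbool_lt; [case: (mBY k)|exact: measurable_cst].
- by move=> w.
Qed.

Lemma mnat_nclones t i (fit : T' -> R) : mreal (U t i) ->
  (forall k, mreal (B t i k)) -> mreal fit ->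
  mnat (fun w => nclones U B beta w t i (fit w)).
Proof.
move=> mU mB mf.
apply: (mnat_piece (N := fun w => noff U w t i (fit w))
  (h := fun n w => count (fun k => ~~ (B t i k w < beta)) (iota 0 n))).
- exact: mnat_noff.
- move=> n; apply: mnat_count => k; apply: mbool_not.
  by apply: mbool_lt; [exact: mB|exact: measurable_cst].
- by move=> w.
Qed.

Lemma good_all_mutants t (pop : T' -> seq R) : good pop ->
  (forall i, mreal (U t i)) -> (forall i k, mreal (B t i k) /\ mreal (Y t i k)) ->
  good (fun w => all_mutants U B Y beta w t (pop w)).
Proof.
move=> gp mU mBY; rewrite /all_mutants.
apply: (good_flatten (h := fun i x w => mutants_of U B Y beta w t i x)) => // i.
apply: good_mutants_of => //; by case: gp.
Qed.

Lemma good_all_clones t (pop : T' -> seq R) : good pop ->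
  (forall i, mreal (U t i)) -> (forall i k, mreal (B t i k)) ->
  good (fun w => all_clones U B beta w t (pop w)).
Proof.
move=> gp mU mB; rewrite /all_clones.
apply: (good_flatten (h := fun i x w => nseq (nclones U B beta w t i x) x)) => // i.
have mi : mreal (fun w => nth 0 (pop w) i) by case: gp.
by apply: good_nseq => //; apply: mnat_nclones.
Qed.

Lemma good_step t (pop : T' -> seq R) : good pop ->
  (forall i, mreal (U t i)) -> (forall i k, mreal (B t i k) /\ mreal (Y t i k)) ->
  good (fun w => step U B Y m beta w t (pop w)).
Proof.
move=> gp mU mBY.
have gm := good_all_mutants gp mU mBY.
have gc : good (fun w => all_clones U B beta w t (pop w)).
  by apply: good_all_clones => // i k; case: (mBY i k).
rewrite /step; case: m; last exact: good_cat.
apply: good_cat => //.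
have -> : (fun w => if all_mutants U B Y beta w t (pop w) is [::] then [::]
            else [:: maxs (all_mutants U B Y beta w t (pop w))]) =
  (fun w => if size (all_mutants U B Y beta w t (pop w)) == 0%N then [::]
            else [:: maxs (all_mutants U B Y beta w t (pop w))]).
  by apply/funext => w; case: (all_mutants _ _ _ _ _ _ _).
apply: good_if; first by apply: (mnat_bool (fun n => n == 0%N)); case: gm.
  exact: good_nil.
by apply: good_single; exact: mreal_maxs.
Qed.

Lemma good_gen t : okt t -> good (fun w => gen U B Y m beta f w t).
Proof.
elim: t => [|t IH] [oU oBY] /=; first exact/good_single/measurable_cst.
apply: good_step.
- apply: IH; split=> [s i st|s i k st]; [apply: oU|apply: oBY]; exact: ltnW.
- by move=> i; apply: oU.
- by move=> i k; apply: oBY.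
Qed.

Lemma mreal_W t : okt t -> mreal (fun w => W U B Y m beta f w t).
Proof.
case: t => [|t] ok /=; first exact: measurable_cst.
apply: mreal_maxs; apply: good_all_mutants.
- apply: good_gen; case: ok => oU oBY; split=> [s i st|s i k st]; [apply: oU|apply: oBY]; exact: ltnW.
- by move=> i; case: ok => oU _; apply: oU.
- by move=> i k; case: ok => _ oBY; apply: oBY.
Qed.

End Proc.

Section Indep.
Context {R : realType} {d : measure_display} {T : measurableType d}.
Variables (P : probability T R) (I : eqType) (X : I -> T -> R).
Hypothesis indX : mutually_independent P X.

Definition rect (s : seq I) (A : I -> set R) : set T :=
  \bigcap_(i in [set` s]) (X i @^-1` A i).

Lemma in_rect s A x : rect s A x <-> (forall i, i \in s -> A i (X i x)).
Proof. by split => [h i iS|h i /= iS]; [exact: h|exact: h]. Qed.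

Definition Pi (J : pred I) : set (set T) :=
  [set E | exists s A, [/\ uniq s, all J s, (forall i, measurable (A i)) & E = rect s A]].

Lemma mX i : measurable_fun setT (X i). Proof. by case: indX. Qed.

Lemma rect_nil A : rect [::] A = setT.
Proof. by apply/seteqP; split => x // _; apply/in_rect => i; rewrite in_nil. Qed.

Lemma rect_cons a s A : rect (a :: s) A = X a @^-1` A a `&` rect s A.
Proof.
apply/seteqP; split => x.
  move/in_rect => h; split; first by apply: h; rewrite inE eqxx.
  by apply/in_rect => i iS; apply: h; rewrite inE iS orbT.
move=> [xa /in_rect xs]; apply/in_rect => i; rewrite inE => /orP[/eqP->//|]; exact: xs.
Qed.

Lemma rect_meas s A : (forall i, measurable (A i)) -> measurable (rect s A).
Proof.
move=> mA; elim: s => [|a s IH]; first by rewrite rect_nil.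
rewrite rect_cons; apply: measurableI => //.
by have := mX a measurableT (mA a); rewrite setTI.
Qed.

Lemma Pi_meas J : Pi J `<=` measurable.
Proof. by move=> E [s [A [_ _ mA ->]]]; exact: rect_meas. Qed.

Lemma gPi_meas J : <<s Pi J >> `<=` measurable.
Proof. apply: smallest_sub; [exact: sigma_algebra_measurable|exact: Pi_meas]. Qed.

Lemma Pi_setI J : setI_closed (Pi J).
Proof.
move=> E1 E2 [s1 [A1 [u1 J1 m1 ->]]] [s2 [A2 [u2 J2 m2 ->]]].
exists (undup (s1 ++ s2)), (fun i => (if i \in s1 then A1 i else setT) `&`
                                     (if i \in s2 then A2 i else setT)); split.
- exact: undup_uniq.
- by apply/allP => i; rewrite mem_undup mem_cat => /orP[] ?; [move/allP: J1|move/allP: J2]; apply.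
- by move=> i; apply: measurableI; case: ifP.
apply/seteqP; split => x.
  move=> [/in_rect h1 /in_rect h2]; apply/in_rect => i; rewrite mem_undup mem_cat => _.
  by split; case: ifP => // ?; [exact: h1|exact: h2].
move/in_rect => h; split; apply/in_rect => i iS.
  by have [] := h i; [rewrite mem_undup mem_cat iS|rewrite iS].
by have [] := h i; [rewrite mem_undup mem_cat iS orbT|rewrite iS].
Qed.

Lemma P_rect s A : uniq s -> (forall i, measurable (A i)) ->
  P (rect s A) = (\big[*%E/1%E]_(i <- s) P (X i @^-1` A i))%E.
Proof. by move=> us mA; case: indX => _; apply. Qed.

Lemma fineP (A : set T) : measurable A -> P A = (fine (P A))%:E.
Proof. by move=> mA; rewrite fineK // fin_num_measure. Qed.

Lemma compl_step (S E : set T) : measurable S -> measurable E ->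
  P (S `&` E) = (P S * P E)%E -> P (~` S `&` E) = (P (~` S) * P E)%E.
Proof.
move=> mS mE eqS.
have -> : ~` S `&` E = E `\` (E `&` S).
  by apply/seteqP; split => x /=; [move=> [nS Ex]; split => // -[]|move=> [Ex nS]; split => // Sx; apply: nS].
have mES : measurable (E `&` S) by exact: measurableI.
have fE : (P E < +oo)%E by rewrite fineP // ltry.
have h1 : P (E `\` (E `&` S)) = (P E - P (S `&` E))%E.
  by rewrite measureD // setIA setIid setIC.
rewrite h1 eqS probability_setC //.
rewrite (fineP mS) (fineP mE) -EFinM -!EFinB -EFinM; congr EFin; ring.
Qed.

Lemma union_step (F : (set T)^nat) (E : set T) : (forall n, measurable (F n)) ->
  measurable E -> trivIset setT F ->
  (forall n, P (F n `&` E) = (P (F n) * P E)%E) ->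
  P (\bigcup_k F k `&` E) = (P (\bigcup_k F k) * P E)%E.
Proof.
move=> mF mE tF hF.
rewrite setI_bigcupl.
have h1 : P (\bigcup_k (F k `&` E)) =
    (\sum_(0 <= k <oo | k \in [set: nat]) ((fine (P E))%:E * P (F k)))%E.
  rewrite measure_bigcup //; last first.
    exact: trivIset_setIr.
    by move=> n _; exact: measurableI.
  apply: eq_eseriesr => n _; apply: eq_trans (hF n) _; by rewrite [in LHS](fineP mE) muleC.
have h2 : P (\bigcup_k F k) = (\sum_(0 <= k <oo | k \in [set: nat]) P (F k))%E.
  by rewrite measure_bigcup.
rewrite h1 h2 [in RHS](fineP mE).
rewrite nneseriesZl; first by rewrite muleC.
by move=> n _.
Qed.

Lemma Pi_indep J s0 A0 : uniq s0 -> all (predC J) s0 -> (forall i, measurable (A0 i)) ->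
  forall D, <<s Pi J >> D -> P (D `&` rect s0 A0) = (P D * P (rect s0 A0))%E.
Proof.
move=> u0 J0 m0.
set E := rect s0 A0.
have mE : measurable E by exact: rect_meas.
have := @dynkin_induction _ (g_sigma_algebraType (Pi J)) (Pi J)
  (fun D => P (D `&` E) = (P D * P E)%E) erefl (@Pi_setI J).
apply.
- by rewrite setTI probability_setT mul1e.
- move=> D [s [A [us Js mA ->]]].
  have dj : all (fun i => i \notin s0) s.
    apply/allP => i iS; apply/negP => i0; move/allP: J0 => /(_ i i0) /=.
    by move/allP: Js => /(_ i iS) ->.
  pose A' i := if i \in s then A i else A0 i.
  have mA' : forall i, measurable (A' i) by move=> i; rewrite /A'; case: ifP.
  have -> : rect s A `&` E = rect (s ++ s0) A'.
    apply/seteqP; split => x.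
      move=> [/in_rect h1 /in_rect h2]; apply/in_rect => i; rewrite mem_cat /A'.
      by case: ifP => [iS _|_ /= i0]; [exact: h1|exact: h2].
    move/in_rect => h; split; apply/in_rect => i iS.
      by have := h i; rewrite mem_cat iS /A' iS; apply.
    have := h i; rewrite mem_cat iS orbT /A'.
    have -> : (i \in s) = false by apply/negP => iS'; move/allP: dj => /(_ i iS'); rewrite iS.
    by apply.
  rewrite P_rect //; last first.
    rewrite cat_uniq us u0 andbT /=; apply/hasPn => i i0; apply/negP => iS.
    by move/allP: dj => /(_ i iS); rewrite i0.
  rewrite big_cat /= P_rect // /E P_rect //.
  congr (_ * _)%E.
    by apply: eq_big_seq => i iS; rewrite /A' iS.
  apply: eq_big_seq => i i0; rewrite /A'.
  have -> : (i \in s) = false by apply/negP => iS'; move/allP: dj => /(_ i iS'); rewrite i0.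
  by [].
- move=> S mS eqS; exact: (compl_step (@gPi_meas J S mS) mE eqS).
- move=> F mF tF hF.
  exact: (union_step (fun n => @gPi_meas J (F n) (mF n)) mE tF hF).
Qed.

End Indep.

Section Comb.
Context {R : realType} {T : Type}.
Variables (U : nat -> nat -> T -> R) (B Y : nat -> nat -> nat -> T -> R).
Variables (m : model) (beta f : R).

Lemma maxs_ge (x : R) s : x \in s -> x <= maxs s.
Proof.
elim: s => [//|a s IH]; rewrite inE => /orP[/eqP->|xs] /=; rewrite le_max.
  by rewrite lexx.
by rewrite IH ?orbT.
Qed.

Lemma flatten_nil (A : nat -> seq R) (s : seq nat) :
  (forall x, x \in s -> A x = [::]) -> flatten (map A s) = [::].
Proof.
elim: s => [//|a s IH] h /=; rewrite h ?inE ?eqxx //.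
by rewrite IH // => x xs; apply: h; rewrite inE xs orbT.
Qed.

Lemma step_nil w t (pop : seq R) :
  (forall j, (j < size pop)%N -> noff U w t j (nth 0 pop j) = 0%N) ->
  step U B Y m beta w t pop = [::].
Proof.
move=> h.
have hm : all_mutants U B Y beta w t pop = [::].
  rewrite /all_mutants indexedE -map_comp; apply: flatten_nil => j; rewrite mem_iota add0n => /andP[_ lt] /=.
  by rewrite /mutants_of h.
have hc : all_clones U B beta w t pop = [::].
  rewrite /all_clones indexedE -map_comp; apply: flatten_nil => j; rewrite mem_iota add0n => /andP[_ lt] /=.
  by rewrite /nclones h.
by rewrite /step hm hc; case: m.
Qed.

Lemma mem_all_mutants w t (pop : seq R) j : (j < size pop)%N ->
  (0 < noff U w t j (nth 0%R pop j))%N -> B t j 0%N w < beta ->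
  Y t j 0%N w \in all_mutants U B Y beta w t pop.
Proof.
move=> js n0 b0; rewrite /all_mutants indexedE -map_comp.
apply/flatten_mapP; exists j; first by rewrite mem_iota.
rewrite /= /mutants_of; apply/mapP; exists 0%N => //.
by rewrite mem_filter /is_mutant b0 mem_iota.
Qed.

End Comb.

Lemma unif_lt (R : realType) (b : R) : 0 < b < 1 ->
  uniform_prob (@ltr01 R) `]-oo, b[%classic = b%:E.
Proof.
move=> /andP[b0 b1].
rewrite /uniform_prob integral_uniform_pdf.
have -> : `]-oo, b[%classic `&` `[0, 1]%classic = `[0, b[%classic :> set R.
  apply/seteqP; split => x /=; rewrite !in_itv /=.
    by move=> [xb /andP[x0 _]]; rewrite x0 xb.
  move=> /andP[x0 xb]; split => //; rewrite x0 /=; exact: (ltW (lt_trans xb b1)).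
rewrite (eq_integral (fun _ => 1%:E)); last first.
  move=> x; rewrite inE /= in_itv /= => /andP[x0 xb].
  by rewrite /uniform_pdf x0 (ltW (lt_trans xb b1)) subr0 invr1.
rewrite integral_cst //= mul1e lebesgue_measure_itv /= lte_fin b0 -EFinD oppr0 addr0; reflexivity.
Qed.


Lemma geo_zero (R : realType) (x r : R) : 0 <= x -> 0 <= r < 1 ->
  (forall t, x <= r ^+ t) -> x = 0.
Proof.
move=> x0 /andP[r0 r1] h.
set q := 1 - r.
have q0 : 0 < q by rewrite /q subr_gt0.
have bern t : 1 + t%:R * q <= (1 + q) ^+ t.
  elim: t => [|t IH]; first by rewrite mul0r addr0 expr0.
  rewrite exprS; apply: le_trans (_ : (1 + q) * (1 + t%:R * q) <= _); last first.
    by apply: ler_wpM2l => //; rewrite addr_ge0 // ltW.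
  have : 0 <= t%:R * q * q by rewrite !mulr_ge0 // ltW.
  rewrite -natr1; nra.
have key t : x * (1 + t%:R * q) <= 1.
  apply: le_trans (_ : r ^+ t * (1 + q) ^+ t <= 1).
    apply: le_trans (_ : x * (1 + q) ^+ t <= _).
      by apply: ler_wpM2l => //.
    by apply: ler_wpM2r; [rewrite exprn_ge0 // addr_ge0 // ltW|exact: h].
  rewrite -exprMn; apply: exprn_ile1.
    by rewrite mulr_ge0 // addr_ge0 // ltW.
  by rewrite /q; nra.
apply/eqP; rewrite eq_le x0 andbT; apply/negP => /negP; rewrite -ltNge => xpos.
have qx : 0 < x * q by rewrite mulr_gt0.
have hq : 0 <= (x * q)^-1 by rewrite invr_ge0 ltW.
have := archi_boundP hq.
set n := Num.Def.archi_bound _ => hn.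
have := key n.
have : 1 < n%:R * (x * q).
  by rewrite -ltr_pdivrMr // div1r.
nra.
Qed.

Section Main.
Context {R : realType} {d : measure_display} {T : measurableType d}.
Variables (P : probability T R) (mu : probability R R) (beta f : R) (m : model)
  (U : nat -> nat -> T -> R) (B Y : nat -> nat -> nat -> T -> R).
Hypotheses (hbeta : 0 < beta < 1)
  (hmu : forall x : R, 0 < x -> (0 < mu `]x, +oo[%classic)%E)
  (hprim : model_primitives P mu U B Y).

Local Notation I := ((nat * nat) + (nat * nat * nat) + (nat * nat * nat))%type.
Local Notation XX := (prim U B Y).

Lemma indX : mutually_independent P XX.
Proof. by case: hprim. Qed.

Definition Jt (t : nat) : pred I := fun j =>
  match j with
  | inl (inl (s, _)) => (s <= t)%N
  | inl (inr (s, _, _)) => (s < t)%N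
  | inr (s, _, _) => (s < t)%N
  end.

Local Notation TJ t := (g_sigma_algebraType (Pi XX (Jt t))).

Lemma mcoord t j : Jt t j -> measurable_fun setT (XX j : TJ t -> R).
Proof.
move=> Jj _ A mA; rewrite setTI; apply: sub_gen_smallest.
exists [:: j], (fun _ => A); split => //=; first by rewrite Jj.
by rewrite rect_cons rect_nil setIT.
Qed.

Lemma okt_le t s : (s <= t)%N ->
  okt (U : nat -> nat -> TJ t -> R) B Y s.
Proof.
move=> st; split => [s' i lt|s' i k lt].
  by apply: (mcoord (j := inl (inl (s', i)))) => /=; exact: (leq_trans (ltnW lt) st).
split.
  by apply: (mcoord (j := inl (inr (s', i, k)))) => /=; exact: (leq_trans lt st).
by apply: (mcoord (j := inr (s', i, k))) => /=; exact: (leq_trans lt st).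
Qed.



Variable N : nat.
Local Notation K := ((N.+1)%:R : R).

Definition Aev (t : nat) : set T := [set w | forall s, (s <= t)%N ->
  popsize U B Y m beta f w s <> 0%N /\ W U B Y m beta f w s <= K].

Definition Dev (t j : nat) : set T := Aev t `&` [set w |
  [/\ (j < popsize U B Y m beta f w t)%N,
      (0 < noff U w t j (nth 0%R (gen U B Y m beta f w t) j))%N &
      forall i, (i < j)%N -> noff U w t i (nth 0%R (gen U B Y m beta f w t) i) = 0%N]].

Definition A0 : I -> set R := fun i =>
  match i with
  | inl (inr _) => `]-oo, beta[%classic
  | inr _ => `]K, +oo[%classic
  | _ => setT
  end.

Definition s0 (t j : nat) : seq I := [:: inl (inr (t, j, 0%N)); inr (t, j, 0%N)].

Definition Cev (t j : nat) : set T := rect XX (s0 t j) A0.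

Lemma mA0 i : measurable (A0 i).
Proof. by case: i => [[]|] * /=. Qed.

Lemma Aev_meas t : <<s Pi XX (Jt t) >> (Aev t).
Proof.
change (@measurable _ (TJ t) (Aev t)).
have -> : Aev t = \bigcap_s (if (s <= t)%N then
    [set w | popsize U B Y m beta f w s <> 0%N] `&` [set w | W U B Y m beta f w s <= K]
    else setT).
  apply/seteqP; split => w /=.
    move=> h s _; case: ifP => // st; exact: h.
  move=> h s st; have := h s Logic.I; by rewrite st.
apply: bigcapT_measurable => s; case: ifP => st //; apply: measurableI.
  have [g _] := @good_gen R _ (TJ t) U B Y m beta f s (okt_le st).
  exact: (mnat_pred (fun n => n <> 0%N) g).
exact: mbool_le (@mreal_W R _ (TJ t) U B Y m beta f s (okt_le st)) (measurable_cst _).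
Qed.

Lemma Dev_meas t j : <<s Pi XX (Jt t) >> (Dev t j).
Proof.
change (@measurable _ (TJ t) (Dev t j)).
have [gs gn] := @good_gen R _ (TJ t) U B Y m beta f t (okt_le (leqnn t)).
have mn i : mnat (fun w : TJ t => noff U w t i (nth 0%R (gen U B Y m beta f w t) i)).
  apply: mnat_noff; last exact: gn.
  by apply: (mcoord (j := inl (inl (t, i)))) => /=.
apply: measurableI; first exact: Aev_meas.
have -> : [set w | [/\ (j < popsize U B Y m beta f w t)%N,
      (0 < noff U w t j (nth 0%R (gen U B Y m beta f w t) j))%N &
      forall i, (i < j)%N -> noff U w t i (nth 0%R (gen U B Y m beta f w t) i) = 0%N]] =
    [set w | (j < popsize U B Y m beta f w t)%N] `&`
    [set w | (0 < noff U w t j (nth 0%R (gen U B Y m beta f w t) j))%N] `&`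
    \bigcap_i (if (i < j)%N then [set w | noff U w t i (nth 0%R (gen U B Y m beta f w t) i) = 0%N]
               else setT).
  apply/seteqP; split => w /=.
    by move=> [h1 h2 h3]; split; [split|move=> i _; case: ifP => // ij; exact: h3].
  move=> [[h1 h2] h3]; split => // i ij; have := h3 i Logic.I; by rewrite ij.
apply: measurableI; first apply: measurableI.
- exact: (mnat_bool (fun n => j < n)%N gs).
- exact: (mnat_bool (fun n => 0 < n)%N (mn j)).
- by apply: bigcapT_measurable => i; case: ifP => // _; exact: mn.
Qed.



Lemma Cev_in t j w : Cev t j w <-> B t j 0%N w < beta /\ K < Y t j 0%N w.
Proof.
rewrite /Cev; split.
  move/in_rect => h; split.
    by have := h (inl (inr (t, j, 0%N))); rewrite inE eqxx /= in_itv /=; apply.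
  by have := h (inr (t, j, 0%N)); rewrite !inE eqxx orbT /= in_itv /= andbT; apply.
move=> [b0 y0]; apply/in_rect => i; rewrite !inE => /orP[]/eqP-> /=;
  by rewrite in_itv /= ?b0 ?y0.
Qed.

Lemma cover t : Aev t.+1 `<=` \bigcup_j (Dev t j `\` Cev t j).
Proof.
move=> w hA.
have hAt : Aev t w by move=> s st; apply: hA; exact: leqW.
have [ps Ws] := hA t.+1 (leqnn _).
have ex : exists j, (j < size (gen U B Y m beta f w t))%N &&
    (0 < noff U w t j (nth 0%R (gen U B Y m beta f w t) j))%N.
  case: (pselect (exists j, (j < size (gen U B Y m beta f w t))%N &&
    (0 < noff U w t j (nth 0%R (gen U B Y m beta f w t) j))%N)) => // nex.
  exfalso; apply: ps; rewrite /popsize /= step_nil // => j js.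
  apply/eqP; rewrite -leqn0 leqNgt; apply/negP => np; apply: nex; exists j.
  by rewrite js np.
case: (ex_minnP ex) => j /andP[js nj] jmin.
exists j => //; split.
  split => //; split => // i ij.
  apply/eqP; rewrite -leqn0 leqNgt; apply/negP => ni.
  have := jmin i; rewrite (ltn_trans ij js) ni => /(_ isT).
  by rewrite leqNgt ij.
move/Cev_in => [b0 y0].
have := mem_all_mutants Y js nj b0 => /maxs_ge hle.
move: Ws => /=; rewrite leNgt => /negP; apply.
exact: (lt_le_trans y0 hle).
Qed.

Lemma Dev_triv t : trivIset setT (Dev t).
Proof.
apply: ltn_trivIset => n k kn; apply/seteqP; split => // w [[_ [_ hk _]] [_ [_ _ hn]]].
by have := hn k kn; move=> e; rewrite e in hk.
Qed.

Definition qr := beta * fine (mu `]K, +oo[%classic).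

Lemma PC t j : P (Cev t j) = qr%:E.
Proof.
case: hprim => _ [_ [hB hY]].
rewrite /Cev (P_rect indX) //; last exact: mA0.
rewrite big_cons big_cons big_nil mule1 /=.
rewrite hB; last exact: measurable_itv.
rewrite hY; last exact: measurable_itv.
rewrite unif_lt // /qr EFinM fineK //.
by rewrite fin_num_measure //; exact: measurable_itv.
Qed.

Lemma qr_gt0 : 0 < qr.
Proof.
case/andP: hbeta => b0 _.
rewrite /qr mulr_gt0 //.
have h := hmu (ltr0Sn _ N).
have fm : mu `]K, +oo[%classic \is a fin_num by rewrite fin_num_measure //; exact: measurable_itv.
by rewrite -lte_fin fineK.
Qed.

Lemma Cev_meas t j : measurable (Cev t j).
Proof. exact: (rect_meas indX _ mA0). Qed.

Lemma qr_le1 : qr <= 1.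
Proof. by have := probability_le1 P (Cev_meas 0 0); rewrite PC lee_fin. Qed.



Lemma Dev_meas' t j : measurable (Dev t j).
Proof. apply: (gPi_meas indX); exact: Dev_meas. Qed.

Lemma Aev_meas' t : measurable (Aev t).
Proof. apply: (gPi_meas indX); exact: Aev_meas. Qed.

Lemma PDC t j : P (Dev t j `\` Cev t j) = ((1 - qr)%:E * P (Dev t j))%E.
Proof.
have mD := Dev_meas' t j; have mC := Cev_meas t j.
have ind : P (Dev t j `&` Cev t j) = (P (Dev t j) * P (Cev t j))%E.
  apply: (Pi_indep indX (J := Jt t)); [by []|by rewrite /= ltnn|exact: mA0|exact: Dev_meas].
have h1 : P (Dev t j `\` Cev t j) = (P (Dev t j) - P (Dev t j `&` Cev t j))%E.
  have fD : (P (Dev t j) < +oo)%E by rewrite (fineP P mD) ltry.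
  by rewrite measureD //; exact: fD.
rewrite h1 ind PC (fineP P mD) -EFinM -EFinB -EFinM; congr EFin; ring.
Qed.

Lemma step_le t : (P (Aev t.+1) <= (1 - qr)%:E * P (Aev t))%E.
Proof.
set F := fun j => Dev t j `\` Cev t j.
have mF j : measurable (F j) by apply: measurableD; [exact: Dev_meas'|exact: Cev_meas].
have tF : trivIset setT F.
  have -> : F = (fun j => Dev t j `&` ~` Cev t j) by apply/funext => j; rewrite /F setDE.
  apply: (@trivIset_setIr _ _ setT (Dev t) (fun j => ~` Cev t j)); exact: Dev_triv.
apply: le_trans (_ : (P (\bigcup_j F j) <= _)%E).
  apply: le_measure; rewrite ?inE; [exact: Aev_meas'|exact: bigcupT_measurable|exact: cover].
have h1 : P (\bigcup_j F j) =
    (\sum_(0 <= j <oo | j \in [set: nat]) ((1 - qr)%:E * P (Dev t j)))%E.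
  rewrite measure_bigcup //; apply: eq_eseriesr => j _; exact: PDC.
have h2 : P (\bigcup_j Dev t j) = (\sum_(0 <= j <oo | j \in [set: nat]) P (Dev t j))%E.
  rewrite measure_bigcup //; [move=> j _; exact: Dev_meas'|exact: Dev_triv].
rewrite h1 nneseriesZl // -h2.
apply: lee_pmul => //; first by rewrite lee_fin subr_ge0 qr_le1.
apply: le_measure; rewrite ?inE; [apply: bigcupT_measurable => j; exact: Dev_meas'|exact: Aev_meas'|].
by move=> w [j _ [hA _]].
Qed.

Lemma Aev_le t : (P (Aev t) <= ((1 - qr) ^+ t)%:E)%E.
Proof.
elim: t => [|t IH]; first by rewrite expr0 probability_le1 //; exact: Aev_meas'.
apply: le_trans (step_le t) _.
rewrite exprS EFinM; apply: lee_pmul => //; by rewrite lee_fin subr_ge0 qr_le1.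
Qed.

Lemma SN_negligible : P.-negligible [set w | survives U B Y m beta f w /\
                         forall t, W U B Y m beta f w t <= K].
Proof.
exists (\bigcap_t Aev t); split.
- by apply: bigcapT_measurable => t; exact: Aev_meas'.
- have mA : measurable (\bigcap_t Aev t) by apply: bigcapT_measurable => t; exact: Aev_meas'.
  rewrite (fineP P mA); congr EFin.
  apply: (@geo_zero _ _ (1 - qr)).
  + by rewrite fine_ge0.
  + by rewrite subr_ge0 qr_le1 /= ltrBlDr ltrDl qr_gt0.
  + move=> t; rewrite -lee_fin -(fineP P mA).
    apply: le_trans (Aev_le t).
    by apply: le_measure; rewrite ?inE //; [exact: Aev_meas'|exact: bigcap_inf].
- by move=> w [sv Wb] t _ s st; split; [exact: sv|exact: Wb].
Qed.

End Main.


Theorem lemma1 (R : realType) (d : measure_display) (T : measurableType d)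
  (P : probability T R) (mu : probability R R) (beta f : R) (m : model)
  (U : nat -> nat -> T -> R) (B Y : nat -> nat -> nat -> T -> R) :
  0 < beta < 1 -> 0 < f ->
  mu `]0, +oo[%classic = 1%E ->
  (forall x : R, 0 < x -> (0 < mu `]x, +oo[%classic)%E) ->
  model_primitives P mu U B Y ->
  P.-negligible [set w | survives U B Y m beta f w /\
                         exists M : R, forall t, W U B Y m beta f w t <= M].
Proof.
move=> hb f0 hmu1 hmu hp.
apply: (@negligibleS _ _ _ P (\bigcup_N [set w | survives U B Y m beta f w /\
           (forall t : nat, W U B Y m beta f w t <= (N.+1%:R : R))])).
  move=> w [sv [M hM]].
  have x0 : 0 <= Num.max M 0 by rewrite le_max lexx orbT.
  have := archi_boundP x0.
  set n := Num.Def.archi_bound _ => hn.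
  exists n => //; split => // t.
  apply: le_trans (hM t) _.
  apply: le_trans (_ : Num.max M 0 <= _); first by rewrite le_max lexx.
  apply: ltW; apply: lt_le_trans hn _.
  by rewrite ler_nat.
apply: negligible_bigcup => N.
exact: (SN_negligible f m hb hmu hp N).
Qed.
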